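(* Let $n = 2k+1 > 3$ be an odd integer, $m_1 = k(2k+1)$ and $m_2 = 6k-3$. If an edge-coloring of a complete graph contains no rainbow $n$-cycle, no rainbow $m_1$-cycle and no rainbow $m_2$-cycle, then it contains no rainbow $M$-cycle for every integer $M \ge 8k^2 - 8k + 12 = 2n^2 - 13n + 23$.
   Context: A coloring is an arbitrary (not necessarily proper) assignment of colors, from an arbitrary set, to the edges of an undirected complete graph; the graph may be finite or infinite. A rainbow $n$-cycle is a cycle through $n$ distinct vertices whose $n$ edges all receive pairwise distinct colors. *)

(* Defs.v *)
From mathcomp Require Import all_boot.
Set Implicit Arguments. Unset Strict Implicit. Unset Printing Implicit Defensive.

(* An edge-coloring of the complete graph on vertex set V (finite or infinite)
   with colors in C is a symmetric map c : V -> V -> C (values on the diagonal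
   are irrelevant). *)
Definition symmetric_coloring (V C : Type) (c : V -> V -> C) : Prop :=
  forall x y, c x y = c y x.

Definition rainbow_cycle (V C : Type) (c : V -> V -> C) (n : nat) : Prop :=
  3 <= n /\
  exists v : nat -> V,
    (forall i j, i < n -> j < n -> v i = v j -> i = j) /\
    (forall i j, i < n -> j < n ->
       c (v i) (v (i.+1 %% n)) = c (v j) (v (j.+1 %% n)) -> i = j).

(* Main.v *)
Require Import Defs.
From mathcomp Require Import all_boot zify.
From Stdlib Require Import Classical.
Lemma arithj (j M : nat) : 8*j*j + 24*j + 28 <= M ->
  exists a b c, M = (6*j+9) + a*(6*j+7) + b*(2*j*j+9*j+8) + c*(2*j+3).
Proof.
move=> hM.
have hd : 0 < 2*j+3 by lia.
have hMe := divn_eq M (2*j+3).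
have hr := ltn_pmod M hd.
set Q := M %/ _ in hMe *. set r := M %% _ in hMe hr *.
case: (posnP r) => [r0|rpos].
  have hQ : 3 <= Q.
    rewrite leqNgt; apply/negP => hQ.
    have : Q * (2*j+3) <= 2 * (2*j+3) by rewrite leq_mul2r; lia.
    lia.
  exists 0, 0, (Q-3). rewrite hMe r0 -{1}(subnK hQ). lia.
have hs := odd_double_half (2*j+3 - r).
set a := (_ - r)./2 in hs.
case: (odd _) hs => /= hs.
  have ha : a <= j by lia.
  have hQ : 5 + 3*a + j <= Q.
    rewrite leqNgt; apply/negP => hQ.
    have : Q * (2*j+3) <= (4 + 3*a + j) * (2*j+3) by rewrite leq_mul2r; lia.
    have : a * (2*j+3) <= j * (2*j+3) by rewrite leq_mul2r; lia.
    lia.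
  exists a, 1, (Q - (5 + 3*a + j)). rewrite hMe -{1}(subnK hQ). lia.
have ha : a <= j+1 by lia.
have hQ : 2 + 3*a <= Q.
  rewrite leqNgt; apply/negP => hQ.
  have : Q * (2*j+3) <= (1 + 3*a) * (2*j+3) by rewrite leq_mul2r; lia.
  have : a * (2*j+3) <= (j+1) * (2*j+3) by rewrite leq_mul2r; lia.
  lia.
exists a, 0, (Q - (2 + 3*a)). rewrite hMe -{1}(subnK hQ). lia.
Qed.

Lemma succmod (x M : nat) : x < M -> x.+1 %% M = if x.+1 < M then x.+1 else 0.
Proof.
move=> h; case: ifP => h2; first by rewrite modn_small.
have -> : x.+1 = M by lia. by rewrite modnn.
Qed.

Lemma chord (V C : Type) (c : V -> V -> C) (M a : nat) :
  symmetric_coloring c -> 3 <= a -> a + 1 <= M ->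
  rainbow_cycle c M -> ~ rainbow_cycle c a -> rainbow_cycle c (M + 2 - a).
Proof.
move=> hsym ha haM [hM [v [vinj cinj]]] nA.
set E := fun i => c (v i) (v (i.+1 %% M)).
have cinjE : forall x y, x < M -> y < M -> E x = E y -> x = y := cinj.
have [i [i' [hi [hi' [hne heq]]]]] : exists i i', i < a /\ i' < a /\ i <> i' /\
    c (v i) (v (i.+1 %% a)) = c (v i') (v (i'.+1 %% a)).
  apply: NNPP => hn; apply: nA; split => //; exists v; split.
    move=> x y hx hy; apply: vinj; lia.
  move=> x y hx hy hxy; apply: NNPP => hxy'; apply: hn.
  by exists x, y.
have key : forall x, x < a - 1 -> c (v x) (v (x.+1 %% a)) = E x.
  move=> x hx; rewrite /E !modn_small //; lia.
have hlast : c (v (a-1)) (v ((a-1).+1 %% a)) = c (v (a-1)) (v 0).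
  have -> : (a-1).+1 = a by lia.
  by rewrite modnn.
have [i0 [hi0 he0]] : exists i0, i0 < a - 1 /\ E i0 = c (v (a-1)) (v 0).
  case: (ltnP i (a-1)) => h1; case: (ltnP i' (a-1)) => h2.
  - exfalso; apply: hne; apply: cinjE; try lia. by rewrite -!key.
  - exists i; split => //. have e : i' = a-1 by lia. by rewrite -key // heq e hlast.
  - exists i'; split => //. have e : i = a-1 by lia. by rewrite -key // -heq e hlast.
  - exfalso; lia.
split; first lia.
set b := M + 2 - a.
exists (fun j => v (if j < b - 1 then a - 1 + j else 0)); split.
  move=> x y hx hy; case: ifP => h1; case: ifP => h2 /vinj; lia.
have edge : forall j, j < b - 1 ->
   c (v (if j < b - 1 then a - 1 + j else 0))
     (v (if j.+1 %% b < b - 1 then a - 1 + j.+1 %% b else 0)) = E (a - 1 + j).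
  move=> j hj; rewrite /E (succmod j b) ?(succmod (a-1+j) M); try lia.
  rewrite hj; have -> : (j.+1 < b) = true by lia.
  case: ifP => h3; case: ifP => h4; try lia; congr (c _ (v _)); lia.
have edge2 : c (v (if b - 1 < b - 1 then a - 1 + (b-1) else 0))
     (v (if (b-1).+1 %% b < b - 1 then a - 1 + (b-1).+1 %% b else 0)) = E i0.
  rewrite ltnn he0 hsym. have -> : (b-1).+1 = b by lia. rewrite modnn.
  have -> : (0 < b - 1) = true by lia. by rewrite addn0.
move=> x y hx hy.
have [h1|h1] : x < b-1 \/ x = b-1 by lia.
all: have [h2|h2] : y < b-1 \/ y = b-1 by lia.
- rewrite !edge // => /cinjE; lia.
- rewrite h2 edge // edge2 => /cinjE; lia.
- rewrite h1 edge2 edge // => /cinjE; lia.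
- lia.
Qed.

Lemma step (V C : Type) (c : V -> V -> C) (a X : nat) :
  symmetric_coloring c -> 3 <= a -> 3 <= X -> ~ rainbow_cycle c a ->
  ~ rainbow_cycle c X -> forall t, ~ rainbow_cycle c (X + t * (a - 2)).
Proof.
move=> hs ha hX nA nX; elim=> [|t IH]; first by rewrite mul0n addn0.
move=> hR; apply: IH.
have e : X + t.+1 * (a - 2) + 2 - a = X + t * (a - 2).
  rewrite mulSn; move: (t * (a - 2)) => w; lia.
rewrite -e; apply: chord => //; rewrite mulSn; move: (t * (a - 2)) => w; lia.
Qed.

Theorem lemma13 (V C : Type) (c : V -> V -> C) (k : nat) :
  symmetric_coloring c ->
  3 < 2 * k + 1 ->
  ~ rainbow_cycle c (2 * k + 1) ->
  ~ rainbow_cycle c (k * (2 * k + 1)) ->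
  ~ rainbow_cycle c (6 * k - 3) ->
  forall M : nat, 8 * k ^ 2 - 8 * k + 12 <= M -> ~ rainbow_cycle c M.
Proof.
move=> hs hk n1 n2 n3 M hM.
have [j ej] : exists j, k = j + 2 by exists (k - 2); lia.
have e2 : k ^ 2 = k * k by rewrite expnS expn1.
have hM' : 8*j*j + 24*j + 28 <= M by rewrite e2 ej in hM; nia.
have [a [b [d hMe]]] := arithj _ _ hM'.
have e1 : 6*k-3-2 = 6*j+7 by lia.
have e3 : k*(2*k+1)-2 = 2*j*j+9*j+8 by rewrite ej; nia.
have e4 : 2*k+1-2 = 2*j+3 by lia.
have -> : M = 6*k-3 + a*(6*k-3-2) + b*(k*(2*k+1)-2) + d*(2*k+1-2).
  by rewrite e1 e3 e4 hMe ej; lia.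
apply: step => //; try lia.
have h3 : 3 <= k * (2 * k + 1).
  by apply: (@leq_trans (2 * 5)) => //; apply: leq_mul; lia.
apply: step => //; first by rewrite e1; move: (a * _) => w; lia.
apply: step => //; lia.
Qed.
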